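(* For every uniform discrete traffic crossing instance on the torus with congestion $\chi$, the worst-case asymptotic delay rate of an optimal scheduler satisfies $\rho_{opt}\ge \chi/(1+\chi)$.
   Context: Setting: a $W\times W$ square region $R$ of the integer grid, $W$ even, is embedded on a torus (a vehicle leaving $R$ on one side reappears instantly in the same lane on the opposite side). There are $m_x$ vertical lanes (vertical grid lines) and $m_y$ horizontal lanes, each assigned a direction. Vehicles occupy grid points on lanes and move along their lane in its direction; time is discrete, and at each step each vehicle either advances one unit or stays; a collision occurs if two vehicles occupy the same grid point at the same time. Intersections are crossing points of a horizontal and a vertical lane. The instance is uniform if every lane contains the same number $n'$ of vehicles (initial positions within lanes arbitrary); $p=n'/W$ is the density and $\chi=\max(0,2p-1)$ is the congestion. A vehicle experiences a delay at time $t$ if it does not move at that step; the delay rate of a collision-free schedule at time $t$ is the maximum (over vehicles) total delay up to time $t$ divided by $t$, and its asymptotic delay rate is the limit superior of the delay rate as $t\to\infty$. $\rho_{opt}=\rho_{opt}(W,p,m_x,m_y)$ denotes the worst-case (over uniform instances of this form) asymptotic delay rate achieved by an optimum (collision-free) scheduler. *)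

(* Defs.v *)
From HB Require Import structures.
From mathcomp Require Import all_boot all_order all_algebra.
From mathcomp Require Import all_classical all_reals.
From mathcomp Require Import topology normedtype sequences.
Set Implicit Arguments. Unset Strict Implicit. Unset Printing Implicit Defensive.
Import Order.TTheory GRing.Theory Num.Theory.

(* Grid points are pairs (x, y) : 'I_W * 'I_W (coordinates mod W).          *)
(* There are mx vertical lanes (lines x = xv i) and my horizontal lanes      *)
(* (lines y = yh j); each lane has a direction (true = increasing coord.,    *)
(* false = decreasing coord.).  A uniform instance has exactly n' vehicles   *)
(* on each lane: vehicle (inl (i, k)) is the k-th vehicle of vertical lane   *)
(* i and (inr (j, k)) the k-th vehicle of horizontal lane j.                 *)

Definition vehicle (mx my n' : nat) : finType :=
  (('I_mx * 'I_n') + ('I_my * 'I_n'))%type.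

Record instance (W mx my n' : nat) := Instance {
  xv : 'I_mx -> 'I_W;
  yh : 'I_my -> 'I_W;
  dv : 'I_mx -> bool;
  dh : 'I_my -> bool;
  pos0 : vehicle mx my n' -> 'I_W
}.

Definition wf_instance W mx my n' (I : instance W mx my n') : Prop :=
  injective (xv I) /\ injective (yh I).

(* A schedule: mv t v = true iff vehicle v advances one unit at step t
   (from time t to time t+1), otherwise it stays. *)
Definition schedule (mx my n' : nat) := nat -> vehicle mx my n' -> bool.

Definition moves mx my n' (S : schedule mx my n') (v : vehicle mx my n') (t : nat)
  : nat := \sum_(s < t) S s v.

Definition advance (W : nat) (d : bool) (o : 'I_W) (k : nat) : nat :=
  if d then (o + k) %% W else (o + (W - k %% W)) %% W.

Definition position W mx my n' (I : instance W mx my n') (S : schedule mx my n')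
    (v : vehicle mx my n') (t : nat) : nat * nat :=
  match v with
  | inl (i, _) => (nat_of_ord (xv I i), advance (dv I i) (pos0 I v) (moves S v t))
  | inr (j, _) => (advance (dh I j) (pos0 I v) (moves S v t), nat_of_ord (yh I j))
  end.

Definition collision_free W mx my n' (I : instance W mx my n') (S : schedule mx my n')
  : Prop :=
  forall (t : nat) (v w : vehicle mx my n'),
    v != w -> position I S v t <> position I S w t.

Definition delay mx my n' (S : schedule mx my n') (v : vehicle mx my n') (t : nat)
  : nat := t - moves S v t.

Definition delay_rate (R : realType) mx my n' (S : schedule mx my n') (t : nat) : R :=
  ((\max_(v : vehicle mx my n') delay S v t)%:R / t%:R)%R.

Definition asymptotic_delay_rate (R : realType) mx my n' (S : schedule mx my n')
  : \bar R :=
  limn_esup (fun t => (delay_rate R S t)%:E)%E.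

Definition density (R : realType) (W n' : nat) : R := (n'%:R / W%:R)%R.
Definition congestion (R : realType) (W n' : nat) : R :=
  (Num.max 0 (2 * density R W n' - 1))%R.

(* Main.v *)
Require Import Defs.
From HB Require Import structures.
From mathcomp Require Import all_boot all_order all_algebra.
From mathcomp Require Import all_classical all_reals.
From mathcomp Require Import topology normedtype sequences.
From mathcomp Require Import zify ereal ring lra.
Import Order.TTheory GRing.Theory Num.Theory.
Import numFieldNormedType.Exports.
Set Implicit Arguments. Unset Strict Implicit.
Lemma adv_mod (W : nat) (d : bool) (o : 'I_W) (c : nat) : (0 < W)%N -> (c < W)%N ->
  exists2 r, (r < W)%N & forall k, (advance d o k == c) = (k %% W == r).
Proof.
move=> W0 cW; have oW := ltn_ord o.
rewrite /advance; case: d.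
- exists ((c + (W - o)) %% W); first by rewrite ltn_mod.
  move=> k.
  have -> : ((o + k) %% W == c) = (o + k == o + (c + (W - o)) %[mod W]).
    have E : (o + (c + (W - o))) %% W = c.
      by rewrite addnCA subnKC ?(ltnW oW) // modnDr modn_small.
    by rewrite E.
  by rewrite eqn_modDl.

- exists ((o + W - c) %% W); first by rewrite ltn_mod.
  move=> k.
  have hk : (k %% W < W)%N by rewrite ltn_mod.
  have -> : ((o + (W - k %% W)) %% W == c) = (o + (W - k %% W) + k %% W == c + k %% W %[mod W]).
    by rewrite eqn_modDr (modn_small cW).
  rewrite -addnA subnK ?(ltnW hk) //.
  have -> : o + W = c + (o + W - c) by lia.
  by rewrite eqn_modDl addKn modn_mod eq_sym.
Qed.

Lemma count_mod (W r : nat) q : (0 < W)%N -> (r < W)%N ->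
  \sum_(k < q * W) (k %% W == r : nat) = q.
Proof.
move=> W0 rW; elim: q => [|q IH]; first by rewrite mul0n big_ord0.
rewrite mulSn addnC -(big_mkord xpredT (fun k => (k %% W == r : nat))).
rewrite (big_cat_nat _ (n := q * W)) ?leq_addr //= big_mkord IH.
have -> : \sum_(q * W <= i < q * W + W) (i %% W == r : nat) =
    \sum_(0 <= i < W) ((i + q * W) %% W == r : nat).
  by rewrite -[in LHS](add0n (q * W)) big_addn add0n addKn.
rewrite big_mkord -addn1; congr (_ + _).
rewrite (eq_bigr (fun k : 'I_W => (k == Ordinal rW : nat))); last first.
  by move=> k _; rewrite addnC modnMDl modn_small.
by rewrite (bigD1 (Ordinal rW)) //= eqxx big1 ?addn0 // => k /negbTE ->.
Qed.

Lemma count_mod_ge (W r M : nat) : (0 < W)%N -> (r < W)%N ->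
  (M %/ W <= \sum_(k < M.+1) (k %% W == r : nat))%N.
Proof.
move=> W0 rW; rewrite -{1}(count_mod (M %/ W) W0 rW).
rewrite -!(big_mkord xpredT (fun k => (k %% W == r : nat))).
rewrite [X in (_ <= X)%N](big_cat_nat _ (n := M %/ W * W)) //=.
  exact: leq_addr.
by rewrite ltnW // ltnS leq_trunc_div.
Qed.

Lemma count_time (m : nat -> nat) (P : pred nat) T :
  m 0 = 0 -> (forall t, m t.+1 = m t \/ m t.+1 = (m t).+1) ->
  (\sum_(k < (m T).+1) P k <= \sum_(t < T.+1) P (m t))%N.
Proof.
move=> m0 step; elim: T => [|T IH]; first by rewrite big_ord1 /= m0 big_ord1.
rewrite [X in (_ <= X)%N]big_ord_recr /=.
case: (step T) => ->; first exact: leq_trans IH (leq_addr _ _).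
by rewrite big_ord_recr /= leq_add2r.
Qed.
Lemma moves0 mx my n' (S : schedule mx my n') v : moves S v 0 = 0.
Proof. by rewrite /moves big_ord0. Qed.

Lemma movesS mx my n' (S : schedule mx my n') v t :
  moves S v t.+1 = moves S v t \/ moves S v t.+1 = (moves S v t).+1.
Proof. by rewrite /moves big_ord_recr /=; case: (S t v); [right; rewrite addn1|left; rewrite addn0]. Qed.

Lemma moves_le mx my n' (S : schedule mx my n') v t : (moves S v t <= t)%N.
Proof.
elim: t => [|t IH]; first by rewrite moves0.
by case: (movesS S v t) => ->; [apply: leq_trans IH _|].
Qed.

Lemma veh_count W mx my n' (d : bool) (o : 'I_W) (c : nat) (S : schedule mx my n') v T :
  (0 < W)%N -> (c < W)%N ->
  (moves S v T %/ W <= \sum_(t < T.+1) (advance d o (moves S v t) == c : nat))%N.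
Proof.
move=> W0 cW; have [r rW Hr] := adv_mod d o W0 cW.
under eq_bigr do rewrite Hr.
apply: leq_trans (count_mod_ge (moves S v T) W0 rW) _.
exact: (count_time (fun k => k %% W == r) T (moves0 S v) (movesS S v)).
Qed.

Lemma atmost1 (T : finType) (q : pred T) :
  (forall x y, q x -> q y -> x = y) -> (\sum_(x : T) (q x : nat) <= 1)%N.
Proof.
move=> H; case: (pickP q) => [x qx|q0].
  rewrite (bigD1 x) //= qx big1 // => y /negbTE yx.
  by case qy: (q y) => //; rewrite (H _ _ qx qy) eqxx in yx.
by rewrite big1 // => y _; rewrite q0.
Qed.
Lemma pair_ge (A B : finType) (G : A * B -> nat) a :
  (\sum_(b : B) G (a, b) <= \sum_(p : A * B) G p)%N.
Proof.
have -> : \sum_(p : A * B) G p = \sum_(x : A) \sum_(y : B) G (x, y).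
  by rewrite pair_big; apply: eq_bigr => -[].
by rewrite (bigD1 a) //= leq_addr.
Qed.
Lemma nat_bound W mx my n' (I : instance W mx my n') (S : schedule mx my n') T
  (i0 : 'I_mx) (j0 : 'I_my) : (0 < W)%N -> collision_free I S ->
  (2 * n' * ((T - \max_(v : vehicle mx my n') delay S v T) %/ W) <= T.+1)%N.
Proof.
move=> W0 cf.
set D := \max_(v : vehicle mx my n') delay S v T.
set c := (nat_of_ord (xv I i0), nat_of_ord (yh I j0)).
pose F v := \sum_(t < T.+1) (position I S v t == c : nat).
have H1 : (\sum_(v : vehicle mx my n') F v <= T.+1)%N.
  rewrite /F exchange_big /=.
  apply: leq_trans (_ : \sum_(t < T.+1) 1 <= T.+1)%N; last by rewrite sum1_card card_ord.
  apply: leq_sum => t _; apply: atmost1 => x y /eqP hx /eqP hy.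
  apply/eqP; apply/negP => /negP nxy; exact: (cf t x y nxy (etrans hx (esym hy))).
have Hm v : (T - D <= moves S v T)%N.
  have : (delay S v T <= D)%N by apply: leq_bigmax.
  by rewrite /delay; have := moves_le S v T; lia.
have HV k : ((T - D) %/ W <= F (inl (i0, k)))%N.
  apply: leq_trans (leq_div2r W (Hm _)) _.
  rewrite /F /position.
  under eq_bigr do rewrite xpair_eqE eqxx /=.
  exact: veh_count.
have HH k : ((T - D) %/ W <= F (inr (j0, k)))%N.
  apply: leq_trans (leq_div2r W (Hm _)) _.
  rewrite /F /position.
  under eq_bigr do rewrite xpair_eqE eqxx andbT.
  exact: veh_count.
apply: leq_trans H1.
rewrite big_sumType /=.
have -> : 2 * n' * ((T - D) %/ W) = n' * ((T - D) %/ W) + n' * ((T - D) %/ W) by lia.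
apply: leq_add.
- apply: leq_trans (pair_ge (fun p => F (inl p)) i0).
  apply: leq_trans (_ : \sum_(k < n') ((T - D) %/ W) <= _)%N.
    by rewrite sum_nat_const card_ord.
  by apply: leq_sum => k _.
- apply: leq_trans (pair_ge (fun p => F (inr p)) j0).
  apply: leq_trans (_ : \sum_(k < n') ((T - D) %/ W) <= _)%N.
    by rewrite sum_nat_const card_ord.
  by apply: leq_sum => k _.
Qed.
Lemma esup_lb (R : realType) (u : nat -> R) (a C : R) :
  (0 <= C)%R -> (forall n, (0 < n)%N -> (a - C / n%:R <= u n)%R) ->
  (a%:E <= limn_esup (fun n => (u n)%:E))%E.
Proof.
move=> C0 Hu.
pose w n : R := (a - (2 * C) * (n.+1%:R)^-1)%R.
have wu n : (0 < n)%N -> (w n <= u n)%R.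
  move=> n0; apply: le_trans (Hu n n0); rewrite /w lerD2l lerN2.
  have np : (0 < n%:R :> R)%R by rewrite ltr0n.
  have np1 : (0 < n.+1%:R :> R)%R by rewrite ltr0n.
  rewrite -subr_ge0.
  have -> : (2 * C * n.+1%:R^-1 - C / n%:R = C * (n%:R - 1) / (n%:R * n.+1%:R))%R.
    rewrite -natr1; field.
    by apply/andP; split; rewrite ?natr1 gt_eqF // ?ltr0n //.
  apply: divr_ge0; last by apply: mulr_ge0; apply: ltW.
  by apply: mulr_ge0 => //; rewrite subr_ge0 ler1n.
have wa : (w n @[n --> \oo] --> a)%classic.
  have -> : a = (a - 2 * C * 0)%R by rewrite mulr0 subr0.
  apply: cvgB; first exact: cvg_cst.
  apply: cvgMl_tmp; exact: cvg_harmonic.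
have wE : limn_esup (fun n => (w n)%:E) = a%:E.
  apply: (cvg_limn_einf_sup _).2; apply: cvg_EFin => //.
  by apply: nearW.
rewrite -wE !limn_esup_lim; apply: lee_lim; try exact: is_cvg_esups.
exists 1%N => // n /= n1.
apply: ge_ereal_sup => _ [k /= nk <-].
apply: le_trans (_ : (u k)%:E <= _)%E.
  by rewrite lee_fin; apply: wu; apply: leq_trans nk.
by apply: ereal_sup_ubound; exists k.
Qed.
Theorem mainTheorem9 (R : realType) (W mx my n' : nat)
    (I : instance W mx my n') (S : schedule mx my n') :
  (0 < W)%N -> ~~ odd W -> (0 < mx)%N -> (0 < my)%N -> (mx <= W)%N -> (my <= W)%N ->
  wf_instance I ->
  collision_free I S ->
  ((congestion R W n' / (1 + congestion R W n'))%:E <= asymptotic_delay_rate R S)%E.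
Proof.
move=> W0 _ mx0 my0 _ _ _ cf.
pose i0 : 'I_mx := Ordinal mx0. pose j0 : 'I_my := Ordinal my0.
apply: (esup_lb (C := (2 * W%:R)%R)); first by rewrite mulr_ge0 // ler0n.
move=> T T0; rewrite /delay_rate.
set D := \max_(v : vehicle mx my n') delay S v T.
have HD : (D <= T)%N by apply/bigmax_leqP => v _; rewrite /delay leq_subr.
have Hn := @nat_bound W mx my n' I S T i0 j0 W0 cf; rewrite -/D in Hn.
have key : (2 * n' * (T - D) <= W * T.+1 + 2 * n' * W)%N.
  move: Hn; have := divn_eq (T - D) W; have := ltn_pmod (T - D) W0.
  move: (T - D) => x; move: (x %/ W) (x %% W) => q r rW xE Hn.
  rewrite xE.
  have h1 := leq_mul Hn (leqnn W).
  have h2 : (2 * n' * r <= 2 * n' * W)%N by rewrite leq_mul2l ltnW // orbT.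
  nia.
have keyR : (2 * n'%:R * (T%:R - D%:R) <= W%:R * (T%:R + 1) + 2 * n'%:R * W%:R :> R)%R.
  have key' : (2 * n' * (T - D) <= W * (T + 1) + 2 * n' * W)%N by rewrite addn1.
  move: key'; rewrite -(ler_nat R) !natrD !natrM natrB // => h; lra.
have Tp : (0 < T%:R :> R)%R by rewrite ltr0n.
have Wp : (0 < W%:R :> R)%R by rewrite ltr0n.
have Dp : (0 <= D%:R :> R)%R by rewrite ler0n.
rewrite /congestion /density.
case: (leqP (2 * n') W) => hn.
- rewrite /Order.max ifF; last first.
    apply/negbTE; rewrite -leNgt.
    rewrite subr_le0 mulrA ler_pdivrMr // mul1r.
    by have := hn; rewrite -(ler_nat R) natrM.
  rewrite addr0 mul0r sub0r.
  apply: le_trans (_ : 0 <= _)%R; last by apply: divr_ge0; rewrite ?ler0n.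
  by rewrite oppr_le0 divr_ge0 ?ler0n // mulr_ge0 // ler0n.
- have Np : (0 < n'%:R :> R)%R by rewrite ltr0n; lia.
  have N1 : (1 <= n'%:R :> R)%R by rewrite ler1n; lia.
  rewrite /Order.max ifT; last first.
    rewrite subr_gt0 mulrA ltr_pdivlMr // mul1r.
    by have := hn; rewrite -(ltr_nat R) natrM.
  rewrite -subr_le0.
  have -> : ((2 * (n'%:R / W%:R) - 1) / (1 + (2 * (n'%:R / W%:R) - 1)) - 2 * W%:R / T%:R
      - D%:R / T%:R
      = (2 * n'%:R * T%:R - W%:R * T%:R - 4 * n'%:R * W%:R - 2 * n'%:R * D%:R)
        / (2 * n'%:R * T%:R) :> R)%R.
    field.
    rewrite !gt_eqF //; lra.
  apply: mulr_le0_ge0; last by rewrite invr_ge0 mulr_ge0 // ?mulr_ge0 // ltW.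
  nra.
Qed.
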